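(* Let $\mathcal X$ be a coherent configuration on $\Omega$, let $\Pi$ be a generalized base of $\mathcal X$ and let $\alpha\in\Omega$. Put $\Omega'=\Omega\setminus\{\alpha\}$, let $\mathcal X'$ be the restriction of $\mathcal X_\alpha$ to $\Omega'$, and let $\Pi'=\{\Gamma\setminus\{\alpha\}:\Gamma\in\Pi\}$. Then $\Pi'$ is a generalized base of $\mathcal X'$.
   Context: A coherent configuration on a finite set $\Omega$ is a pair $\mathcal X=(\Omega,S)$ where $S$ is a partition of $\Omega\times\Omega$ such that $1_\Omega$ is a union of elements of $S$, $s^*=\{(\beta,\alpha):(\alpha,\beta)\in s\}\in S$ for $s\in S$, and for $r,s,t\in S$ the number $|\{\gamma:(\alpha,\gamma)\in r,(\gamma,\beta)\in s\}|$ is independent of $(\alpha,\beta)\in t$. Relations are unions of elements of $S$; fibers are sets $\Gamma$ with $1_\Gamma\in S$. A fission of $\mathcal X$ is a coherent configuration on $\Omega$ all of whose relations include those of $\mathcal X$. $\mathcal X$ is complete if every element of $S$ is a singleton. For $\Pi\subseteq 2^\Omega$, the $\Pi$-fission of $\mathcal X$ is the smallest fission in which every element of $\Pi$ is a union of fibers; $\Pi$ is a generalized base if its $\Pi$-fission is complete. $\mathcal X_\alpha$ denotes the $\{\{\alpha\}\}$-fission of $\mathcal X$ (so $\{\alpha\}$ and hence $\Omega\setminus\{\alpha\}$ are unions of fibers). For a union $\Gamma$ of fibers, the restriction $\mathcal X_\Gamma=(\Gamma,\{s\cap(\Gamma\times\Gamma):s\in S\}\setminus\{\emptyset\})$. 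*)

(* Defs.v *)
From mathcomp Require Import all_boot.
Set Implicit Arguments. Unset Strict Implicit. Unset Printing Implicit Defensive.

Section CC.
Variable T : finType.
Implicit Types (D G : {set T}) (S : {set {set T * T}}) (r s t : {set T * T}).

Definition diag G : {set T * T} := [set p | (p.1 == p.2) && (p.1 \in G)].

Definition transp s : {set T * T} := [set p | (p.2, p.1) \in s].

Definition is_rel S r : Prop := exists2 P : {set {set T * T}}, P \subset S & r = cover P.

Definition inum r s (a b : T) : nat := #|[set g | ((a, g) \in r) && ((g, b) \in s)]|.

Definition coherent D S : Prop :=
  [/\ partition S (setX D D),
      is_rel S (diag D),
      (forall s, s \in S -> transp s \in S) &
      (forall r s t, r \in S -> s \in S -> t \in S ->
         forall a b a' b', (a, b) \in t -> (a', b') \in t ->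
           inum r s a b = inum r s a' b')].

Definition fiber S G : Prop := diag G \in S.

Definition union_of_fibers S G : Prop :=
  exists2 F : {set {set T}}, (forall H, H \in F -> fiber S H) & G = \bigcup_(H in F) H.

Definition fission D S S' : Prop :=
  coherent D S' /\ (forall r, is_rel S r -> is_rel S' r).

Definition Pi_fission D S (Pi : {set {set T}}) S' : Prop :=
  [/\ fission D S S',
      (forall G, G \in Pi -> union_of_fibers S' G) &
      (forall S'', fission D S S'' ->
         (forall G, G \in Pi -> union_of_fibers S'' G) -> fission D S' S'')].

Definition complete S : Prop := forall s, s \in S -> #|s| = 1.

Definition gen_base D S (Pi : {set {set T}}) : Prop :=
  exists2 S', Pi_fission D S Pi S' & complete S'.

Definition restr G S : {set {set T * T}} := [set s :&: setX G G | s in S] :\ set0.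

End CC.

(* Main.v *)
Require Import Defs.
From mathcomp Require Import all_boot.
Set Implicit Arguments. Unset Strict Implicit. Unset Printing Implicit Defensive.

Section Gen.
Variable T : finType.
Implicit Types (X r R : {set T * T}) (P Q : {set {set T * T}}).

Lemma pblock_out P (x : T * T) : x \notin cover P -> pblock P x = set0.
Proof.
move=> H; rewrite /pblock; case: pickP => //= B /andP[PB xB].
by case/negP: H; apply/bigcupP; exists B.
Qed.

Lemma blk_eq P X R p : partition P X -> p \in X ->
  (R == pblock P p) = (R \in P) && (p \in R).
Proof.
move=> hP pX; have cP := cover_partition hP; have tI := partition_trivIset hP.
case RP: (R \in P) => /=.
  apply/eqP/idP => [->|pR]; first by rewrite mem_pblock cP.
  by rewrite (def_pblock tI RP pR).
apply/eqP => eR; move: RP; rewrite eR pblock_mem //= cP //.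
Qed.

Lemma rel_block P X r x : partition P X -> is_rel P r -> x \in r ->
  pblock P x \subset r.
Proof.
move=> hP [P0 sP0 ->] /bigcupP [B BP0 xB].
rewrite (def_pblock (partition_trivIset hP) (subsetP sP0 _ BP0) xB).
by apply/subsetP=> y yB; apply/bigcupP; exists B.
Qed.

Lemma is_rel_blocks P X r : partition P X -> r \subset X ->
  (forall x, x \in r -> pblock P x \subset r) -> is_rel P r.
Proof.
move=> hP rX H; exists [set B in P | B \subset r]; first by apply/subsetP=> B; rewrite inE => /andP[].
apply/setP=> x; apply/idP/bigcupP => [xr|[B] ]; last by rewrite inE => /andP[_ /subsetP]; apply.
have xX : x \in cover P by rewrite (cover_partition hP); apply: (subsetP rX).
by exists (pblock P x); rewrite ?inE ?pblock_mem ?H ?mem_pblock.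
Qed.

Lemma rel_of_complete P X r : partition P X -> (forall B, B \in P -> #|B| = 1) ->
  r \subset X -> is_rel P r.
Proof.
move=> hP cP rX; apply: (is_rel_blocks hP rX) => x xr.
have xX : x \in cover P by rewrite (cover_partition hP); apply: (subsetP rX).
have /eqP/cards1P [y Ey] := cP _ (pblock_mem xX).
have : x \in pblock P x by rewrite mem_pblock.
by rewrite Ey inE => /eqP xy; rewrite sub1set -xy.
Qed.


Lemma complete_of_rel P X : partition P X ->
  (forall x, x \in X -> is_rel P [set x]) -> forall B, B \in P -> #|B| = 1.
Proof.
move=> hP H B BP.
have /set0Pn [x xB] : B != set0 by apply: (partition_neq0 hP BP).
have xX : x \in X by apply: (subsetP (partitionS hP BP)).
have := rel_block hP (H _ xX) (set11 x).
rewrite (def_pblock (partition_trivIset hP) BP xB) => sB.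
have -> : B = [set x] by apply/eqP; rewrite eqEsubset sB sub1set xB.
by rewrite cards1.
Qed.

Section Coh.
Variables (D : {set T}) (S : {set {set T * T}}).
Hypothesis hS : coherent D S.

Lemma cohP : partition S (setX D D).
Proof. by case: hS. Qed.

Lemma coh_cover : cover S = setX D D.
Proof. exact: cover_partition cohP. Qed.

Lemma coh_tI : trivIset S.
Proof. exact: partition_trivIset cohP. Qed.

Lemma blk_in p : p \in setX D D -> pblock S p \in S.
Proof. by move=> pD; rewrite pblock_mem // coh_cover. Qed.

Lemma blk_mem p : p \in setX D D -> p \in pblock S p.
Proof. by move=> pD; rewrite mem_pblock coh_cover. Qed.

Lemma blk_sub B : B \in S -> B \subset setX D D.
Proof. exact: partitionS cohP. Qed.

Lemma diag_block x : x \in D -> pblock S (x, x) \subset diag D.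
Proof.
move=> xD; case: hS => hP hd _ _; apply: (rel_block hP hd).
by rewrite inE /= eqxx.
Qed.

Lemma row_lemma B x y x' y' : B \in S -> (x, y) \in B -> (x', y') \in B ->
  pblock S (x, x) = pblock S (x', x').
Proof.
move=> BS xyB xyB'.
have := subsetP (blk_sub BS) _ xyB; rewrite inE => /andP [/= xD yD].
have := subsetP (blk_sub BS) _ xyB'; rewrite inE => /andP [/= xD' yD'].
set d := pblock S (x, x).
have dS : d \in S by apply: blk_in; rewrite inE /= xD.
have dd := diag_block xD.
have E : inum d B x y = 1.
  rewrite /inum; have -> : [set g | ((x, g) \in d) && ((g, y) \in B)] = [set x].
    apply/setP=> g; rewrite !inE; apply/andP/eqP => [[xg _]|->].
      by have := subsetP dd _ xg; rewrite inE /= => /andP [/eqP] .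
    by rewrite xyB blk_mem // inE /= xD.
  by rewrite cards1.
case: hS => _ _ _ hi.
have := hi _ _ _ dS BS BS _ _ _ _ xyB xyB'; rewrite E /inum => /esym /eqP.
case/cards1P => g Eg.
have : g \in [set g | ((x', g) \in d) && ((g, y') \in B)] by rewrite Eg set11.
rewrite inE => /andP [xg _].
have := subsetP dd _ xg; rewrite inE /= => /andP [/eqP eg _]; subst g.
by rewrite (def_pblock coh_tI dS xg).
Qed.

Lemma transp_block p : pblock S (p.2, p.1) = transp (pblock S p).
Proof.
case: hS => _ _ ht _.
case pD : (p \in setX D D).
  have BS := blk_in pD; have tB := ht _ BS.
  apply: (def_pblock coh_tI tB); rewrite inE /=.
  by case: p pD {BS tB} => u v pD /=; rewrite blk_mem.
rewrite !pblock_out ?coh_cover ?pD //; last by case: p pD => u v; rewrite !inE /= andbC => ->.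
by apply/setP=> q; rewrite !inE.
Qed.

Lemma col_lemma B x y x' y' : B \in S -> (x, y) \in B -> (x', y') \in B ->
  pblock S (y, y) = pblock S (y', y').
Proof.
move=> BS xyB xyB'; have [_ _ ht _] := hS.
by apply: (@row_lemma _ y x y' x' (ht _ BS)); rewrite inE.
Qed.

Lemma coh_inum r s t a b a' b' : r \in S -> s \in S -> t \in S ->
  (a, b) \in t -> (a', b') \in t -> inum r s a b = inum r s a' b'.
Proof. by move=> rS sS tS H1 H2; have [_ _ _ hi] := hS; apply: (hi r s t rS sS tS). Qed.

End Coh.


Lemma rel_sub P X r : partition P X -> is_rel P r -> r \subset X.
Proof.
move=> hP [P0 sP0 ->]; apply/subsetP=> x /bigcupP [B BP0 xB].
by apply: (subsetP (partitionS hP (subsetP sP0 _ BP0))).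
Qed.

Definition cplt (Y : {set T}) : {set {set T * T}} :=
  preim_partition (fun p : T * T => p) (setX Y Y).

Lemma cplt_part (Y : {set T}) : partition (cplt Y) (setX Y Y).
Proof. exact: preim_partitionP. Qed.

Lemma cplt_blk (Y : {set T}) B : B \in cplt Y -> exists2 p, p \in setX Y Y & B = [set p].
Proof.
case/imsetP => p pX ->; exists p => //; apply/setP=> q; rewrite !inE.
move: pX; rewrite inE => pX.
by apply/andP/eqP => [[_ /eqP]|->] //; rewrite pX eqxx.
Qed.

Lemma cplt_complete (Y : {set T}) : complete (cplt Y).
Proof. by move=> B /cplt_blk [p _ ->]; rewrite cards1. Qed.

Lemma cplt_coh (Y : {set T}) : coherent Y (cplt Y).
Proof.
have hP := cplt_part Y.
split => //.
- apply: (rel_of_complete hP (@cplt_complete Y)).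
  by apply/subsetP=> p; rewrite !inE => /andP [/eqP <- ->]; rewrite andbb.
- move=> s /cplt_blk [p pX ->]; apply/imsetP; exists (p.2, p.1).
    by move: pX; rewrite !inE andbC.
  case: p pX => u v pX; apply/setP => [[w z]]; rewrite !inE /= !xpair_eqE.
  move: pX; rewrite !inE /=.
  move=> /andP [uY vY]; apply/andP/and3P => [[/eqP -> /eqP ->]|[_ /eqP <- /eqP <-]]; by rewrite ?uY ?vY ?eqxx.
- move=> r s t _ _ /cplt_blk [p _ ->] a b a' b'.
  by rewrite !inE => /eqP <- /eqP [-> ->].
Qed.

Lemma cplt_fiber (Y : {set T}) x : x \in Y -> fiber (cplt Y) [set x].
Proof.
move=> xX; rewrite /fiber; apply/imsetP; exists (x, x); first by rewrite inE /= xX.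
apply/setP=> q; rewrite !inE; case: q => u v /=.
rewrite xpair_eqE; apply/andP/andP => [[/eqP -> /eqP ->]|[_ /andP [/eqP <- /eqP <-]]]; by rewrite ?xX ?eqxx.
Qed.

End Gen.
Section Hat.
Variable T : finType.
Variables (D : {set T}) (a : T) (Sa S2 : {set {set T * T}}).
Hypotheses (aD : a \in D) (hSa : coherent D Sa) (hfa : diag [set a] \in Sa)
  (hS2 : coherent (D :\ a) S2)
  (hrel : forall r, is_rel (restr (D :\ a) Sa) r -> is_rel S2 r).

Local Notation D' := (D :\ a).
Local Notation P := (pblock S2).

Definition fk (p : T * T) := (if p.1 == a then p.2 else p.1, if p.2 == a then p.1 else p.2).
Definition K (p : T * T) := (p.1 == a, p.2 == a, P (fk p)).
Definition Shat := preim_partition K (setX D D).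

Lemma Shat_part : partition Shat (setX D D).
Proof. exact: preim_partitionP. Qed.

Lemma Shat_blk B : B \in Shat ->
  exists2 x, x \in setX D D & B = [set y in setX D D | K x == K y].
Proof. by case/imsetP => x xD ->; exists x. Qed.

Lemma pblock_Shat x : x \in setX D D -> pblock Shat x = [set y in setX D D | K x == K y].
Proof.
move=> xD; apply: def_pblock (partition_trivIset Shat_part) _ _.
  exact: imset_f.
by rewrite inE xD eqxx.
Qed.

Lemma inD' x : (x \in D') = (x != a) && (x \in D).
Proof. by rewrite in_setD1. Qed.

Lemma inXD' u v : ((u, v) \in setX D' D') = [&& u != a, u \in D, v != a & v \in D].
Proof. by rewrite inE /= !inD' -!andbA. Qed.

Lemma L_same p q : p \in setX D' D' -> q \in setX D' D' -> P p = P q ->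
  q \in pblock Sa p.
Proof.
move=> pD qD epq.
have pDD : p \in setX D D.
  by move: pD; rewrite !inE => /andP [/andP [_ ->] /andP [_ ->]].
set R := pblock Sa p :&: setX D' D'.
have pR : p \in R by rewrite inE pD (blk_mem hSa).
have Rr : R \in restr D' Sa.
  rewrite /restr in_setD1; apply/andP; split; first by apply/set0Pn; exists p.
  by apply: imset_f; apply: (blk_in hSa).
have relR : is_rel S2 R by apply: hrel; exists [set R]; rewrite ?sub1set ?cover1.
have := rel_block (cohP hS2) relR pR; rewrite epq => sub.
have : q \in R by apply: (subsetP sub); apply: (blk_mem hS2).
by rewrite inE => /andP [].
Qed.

Lemma L_alpha v v' : v \in D' -> v' \in D' -> (v', v') \in pblock Sa (v, v) ->
  (a, v') \in pblock Sa (a, v).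
Proof.
move=> vD vD' vv.
have vDD : v \in D by move: vD; rewrite inD' => /andP [].
set s0 := pblock Sa (a, v).
have avD : (a, v) \in setX D D by rewrite inE /= aD vDD.
have s0S : s0 \in Sa by apply: (blk_in hSa).
have avs0 : (a, v) \in s0 by apply: (blk_mem hSa).
have F g w : (g, w) \in s0 -> g = a.
  move=> gw.
  have := row_lemma hSa s0S gw avs0.
  have gD : g \in D.
    by have := subsetP (blk_sub hSa s0S) _ gw; rewrite inE => /andP [].
  have aa : (a, a) \in diag [set a] by rewrite inE /= eqxx set11.
  rewrite (def_pblock (coh_tI hSa) hfa aa) => eg.
  have : (g, g) \in pblock Sa (g, g) by apply: (blk_mem hSa); rewrite inE /= gD.
  by rewrite eg inE /= => /andP [_]; rewrite inE => /eqP.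
have tS : transp s0 \in Sa by case: hSa => _ _ ht _; apply: ht.
have E : inum (transp s0) s0 v v = 1.
  rewrite /inum; have -> : [set g | ((v, g) \in transp s0) && ((g, v) \in s0)] = [set a].
    apply/setP=> g; rewrite !inE /= andbb; apply/idP/eqP => [/F //|->//].
  by rewrite cards1.
have vvt : (v, v) \in pblock Sa (v, v) by apply: (blk_mem hSa); rewrite inE /= vDD.
have tS2 : pblock Sa (v, v) \in Sa by apply: (blk_in hSa); rewrite inE /= vDD.
have := coh_inum hSa tS s0S tS2 vvt vv; rewrite E /inum => /esym /eqP.
case/cards1P => g Eg.
have : g \in [set g | ((v', g) \in transp s0) && ((g, v') \in s0)] by rewrite Eg set11.
rewrite !inE /= andbb => gv'.
by rewrite -(F _ _ gv').
Qed.

Lemma refine x y : x \in setX D D -> y \in setX D D -> K x = K y ->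
  y \in pblock Sa x.
Proof.
case: x => u v; case: y => u' v'.
rewrite !inE /= => /andP [uD vD] /andP [uD' vD'].
rewrite /K /fk /= => [[e1 e2 e3]].
case ua: (u == a) e1 e3 => e1; move: e1 ua; case ua': (u' == a) => // _ ua.
  case va: (v == a) e2 => e2; move: e2 va; case va': (v' == a) => // _ va.
    by rewrite (eqP ua) (eqP ua') (eqP va) (eqP va') (blk_mem hSa) // inE /= aD.
  rewrite (eqP ua) (eqP ua') => e3.
  apply: L_alpha; rewrite ?inD' ?va ?va' //.
  by apply: L_same; rewrite // inXD' ?va ?va' ?vD ?vD'.
case va: (v == a) e2 => e2; move: e2 va; case va': (v' == a) => // _ va.
  rewrite (eqP va) (eqP va') => e3.
  have h1 : (u', u') \in pblock Sa (u, u).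
    by apply: L_same; rewrite // inXD' ?ua ?ua' ?uD ?uD'.
  have h2 := L_alpha (v:=u) (v':=u'); rewrite -[(u, a)]/((a, u).2, (a, u).1).
  rewrite (transp_block hSa) inE /=; apply: h2 => //; by rewrite inD' ?ua ?ua'.
move=> e3; apply: L_same => //; by rewrite inXD' ?ua ?ua' ?va ?va' ?uD ?uD' ?vD ?vD'.
Qed.


Lemma transpK (B : {set T * T}) : transp (transp B) = B.
Proof. by apply/setP=> [[u v]]; rewrite !inE. Qed.

Lemma K_swap p : K (p.2, p.1) = (p.2 == a, p.1 == a, transp (P (fk p))).
Proof. by rewrite -(transp_block hS2). Qed.

Lemma Kswap_eq x y : (K x == K y) = (K (x.2, x.1) == K (y.2, y.1)).
Proof.
rewrite !K_swap /K !xpair_eqE (inj_eq (can_inj transpK)).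
by case: (_ == (y.1 == a)); case: (_ == (y.2 == a)).
Qed.

Lemma Shat_diag : is_rel Shat (diag D).
Proof.
apply: (is_rel_blocks Shat_part).
  by apply/subsetP=> [[u v]]; rewrite !inE /= => /andP [/eqP <- ->].
move=> [x y]; rewrite inE /= => /andP [/eqP exy xD]; subst y.
rewrite pblock_Shat ?inE /= ?xD //.
apply/subsetP => [[u v]]; rewrite !inE /= => /andP [/andP [uD vD]].
rewrite /K /fk /= !xpair_eqE => /andP [/andP [/eqP e1 /eqP e2] e3].
case xa: (x == a) e1 e2 e3 => e1 e2 e3.
  by rewrite (eqP (esym e1)) (eqP (esym e2)) eqxx aD.
rewrite -e1 -e2 /= in e3; move/eqP: e3 => e3.
have xD' : x \in D' by rewrite inD' xa xD.
have uvD : (u, v) \in setX D' D' by rewrite inXD' -e1 -e2 uD vD.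
have := subsetP (diag_block hS2 xD') (u, v); rewrite e3 (blk_mem hS2) // => /(_ isT).
by rewrite inE /= => /andP [-> _]; rewrite uD.
Qed.

Lemma Shat_transp B : B \in Shat -> transp B \in Shat.
Proof.
case/Shat_blk => x xD ->; apply/imsetP; exists (x.2, x.1).
  by move: xD; rewrite !inE /= andbC.
apply/setP => [[w z]]; rewrite !inE /= [(z \in D) && _]andbC.
by rewrite (Kswap_eq x (z, w)).
Qed.

Lemma Kua u : K (u, a) = (u == a, true, P (u, u)).
Proof. by rewrite /K /fk /= eqxx; case: ifP => [/eqP ->|]. Qed.

Lemma Kav v : K (a, v) = (true, v == a, P (v, v)).
Proof. by rewrite /K /fk /= eqxx; case: ifP => [/eqP ->|]. Qed.

Lemma Kug u g : g != a -> K (u, g) = (u == a, false, P (if u == a then g else u, g)).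
Proof. by move=> ga; rewrite /K /fk /= (negbTE ga). Qed.

Lemma Kgv g v : g != a -> K (g, v) = (false, v == a, P (g, if v == a then g else v)).
Proof. by move=> ga; rewrite /K /fk /= (negbTE ga). Qed.


Lemma memS2 (R : {set T * T}) p : R \in S2 -> p \in setX D' D' -> (p \in R) = (R == P p).
Proof. by move=> RS pD; rewrite (@blk_eq _ _ _ R p (cohP hS2) pD) RS. Qed.

Lemma notS2 (R : {set T * T}) p : R \notin S2 -> p \in setX D' D' -> (R == P p) = false.
Proof. by move=> RS pD; rewrite (@blk_eq _ _ _ R p (cohP hS2) pD) (negbTE RS). Qed.

Lemma outS2 (R : {set T * T}) w z : R \in S2 -> (w \notin D') || (z \notin D') -> ((w, z) \in R) = false.
Proof.
move=> RS H; apply/negbTE/negP => wz.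
have := subsetP (blk_sub hS2 RS) _ wz; rewrite inE /=.
by case/orP: H => /negbTE ->; rewrite ?andbF.
Qed.

Lemma cnt_FF (R S0 : {set T * T}) u v u' v' : u \in D' -> v \in D' -> u' \in D' -> v' \in D' ->
  P (u, v) = P (u', v') ->
  #|[set g in D' | (R == P (u, g)) && (S0 == P (g, v))]| =
  #|[set g in D' | (R == P (u', g)) && (S0 == P (g, v'))]|.
Proof.
move=> uD vD uD' vD' e.
have eq w z : w \in D' -> z \in D' ->
  [set g in D' | (R == P (w, g)) && (S0 == P (g, z))] =
  if (R \in S2) && (S0 \in S2) then [set g | ((w, g) \in R) && ((g, z) \in S0)] else set0.
  move=> wD zD; apply/setP => g; rewrite !inE -inD'.
  case gD: (g \in D') => /=.
    have p1 : (w, g) \in setX D' D' by rewrite inE /= wD gD.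
    have p2 : (g, z) \in setX D' D' by rewrite inE /= zD gD.
    case RS: (R \in S2); case SS: (S0 \in S2) => /=.
    - by rewrite inE (memS2 RS p1) (memS2 SS p2).
    - by rewrite (notS2 (negbT SS) p2) andbF inE.
    - by rewrite (notS2 (negbT RS) p1) inE.
    - by rewrite (notS2 (negbT RS) p1) inE.
  case RS: (R \in S2); case SS: (S0 \in S2) => //=; rewrite ?inE //.
  by rewrite (outS2 RS) ?gD ?orbT.
rewrite !eq //; case: ifP => // /andP [RS SS].
have t1 := blk_in hS2 (p := (u, v)); have t2 := blk_mem hS2 (p := (u, v)).
have uvD : (u, v) \in setX D' D' by rewrite inE /= uD vD.
have uvD' : (u', v') \in setX D' D' by rewrite inE /= uD' vD'.
have := coh_inum hS2 RS SS (t1 uvD) (t2 uvD) _; rewrite /inum; apply.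
by rewrite e (blk_mem hS2).
Qed.

Lemma cnt_TF (R S0 : {set T * T}) v v' : v \in D' -> v' \in D' -> P (v, v) = P (v', v') ->
  #|[set g in D' | (R == P (g, g)) && (S0 == P (g, v))]| =
  #|[set g in D' | (R == P (g, g)) && (S0 == P (g, v'))]|.
Proof.
move=> vD vD' e.
have eq z : z \in D' ->
  [set g in D' | (R == P (g, g)) && (S0 == P (g, z))] =
  if (R \in S2) && (S0 \in S2) then [set g | ((g, g) \in R) && ((g, z) \in S0)] else set0.
  move=> zD; apply/setP => g; rewrite !inE -inD'.
  case gD: (g \in D') => /=.
    have p1 : (g, g) \in setX D' D' by rewrite inE /= gD.
    have p2 : (g, z) \in setX D' D' by rewrite inE /= zD gD.
    case RS: (R \in S2); case SS: (S0 \in S2) => /=.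
    - by rewrite inE (memS2 RS p1) (memS2 SS p2).
    - by rewrite (notS2 (negbT SS) p2) andbF inE.
    - by rewrite (notS2 (negbT RS) p1) inE.
    - by rewrite (notS2 (negbT RS) p1) inE.
  case RS: (R \in S2); case SS: (S0 \in S2) => //=; rewrite ?inE //.
  by rewrite (outS2 RS) ?gD ?orbT.
rewrite !eq //; case: ifP => // /andP [RS SS].
have /set0Pn [[x0 y0] xy0] := partition_neq0 (cohP hS2) SS.
have eq2 z : [set g | ((g, g) \in R) && ((g, z) \in S0)] =
   if (x0, x0) \in R then [set g | (g, z) \in S0] else set0.
  apply/setP => g; rewrite !inE.
  case gz: ((g, z) \in S0); rewrite ?andbF; last by case: ifP; rewrite ?inE ?gz.
  have gD : g \in D'.
    by have := subsetP (blk_sub hS2 SS) _ gz; rewrite inE => /andP [].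
  have x0D : x0 \in D'.
    by have := subsetP (blk_sub hS2 SS) _ xy0; rewrite inE => /andP [].
  have pg : (g, g) \in setX D' D' by rewrite inE /= gD.
  have px : (x0, x0) \in setX D' D' by rewrite inE /= x0D.
  rewrite andbT (memS2 RS pg) (row_lemma hS2 SS gz xy0) -(memS2 RS px).
  by case: ifP; rewrite ?inE ?gz.
rewrite !eq2; case: ifP => // _.
have tS : transp S0 \in S2 by case: hS2 => _ _ ht _; apply: ht.
have vvD : (v, v) \in setX D' D' by rewrite inE /= vD.
have := coh_inum hS2 tS SS (blk_in hS2 vvD) (blk_mem hS2 vvD) _; rewrite /inum.
have ee z : [set g | ((z, g) \in transp S0) && ((g, z) \in S0)] = [set g | (g, z) \in S0].
  by apply/setP => g; rewrite !inE andbb.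
move/(_ v' v'); rewrite !ee; apply; by rewrite e (blk_mem hS2) // inE /= vD'.
Qed.

Lemma cnt_FT (R S0 : {set T * T}) u u' : u \in D' -> u' \in D' -> P (u, u) = P (u', u') ->
  #|[set g in D' | (R == P (u, g)) && (S0 == P (g, g))]| =
  #|[set g in D' | (R == P (u', g)) && (S0 == P (g, g))]|.
Proof.
move=> uD uD' e.
have eq z : z \in D' ->
  [set g in D' | (R == P (z, g)) && (S0 == P (g, g))] =
  if (R \in S2) && (S0 \in S2) then [set g | ((z, g) \in R) && ((g, g) \in S0)] else set0.
  move=> zD; apply/setP => g; rewrite !inE -inD'.
  case gD: (g \in D') => /=.
    have p1 : (z, g) \in setX D' D' by rewrite inE /= gD zD.
    have p2 : (g, g) \in setX D' D' by rewrite inE /= gD.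
    case RS: (R \in S2); case SS: (S0 \in S2) => /=.
    - by rewrite inE (memS2 RS p1) (memS2 SS p2).
    - by rewrite (notS2 (negbT SS) p2) andbF inE.
    - by rewrite (notS2 (negbT RS) p1) inE.
    - by rewrite (notS2 (negbT RS) p1) inE.
  case RS: (R \in S2); case SS: (S0 \in S2) => //=; rewrite ?inE //.
  by rewrite (outS2 RS) ?gD ?orbT.
rewrite !eq //; case: ifP => // /andP [RS SS].
have /set0Pn [[x0 y0] xy0] := partition_neq0 (cohP hS2) RS.
have eq2 z : [set g | ((z, g) \in R) && ((g, g) \in S0)] =
   if (y0, y0) \in S0 then [set g | (z, g) \in R] else set0.
  apply/setP => g; rewrite !inE.
  case gz: ((z, g) \in R); last by case: ifP; rewrite ?inE ?gz.
  have gD : g \in D'.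
    by have := subsetP (blk_sub hS2 RS) _ gz; rewrite inE => /andP [].
  have y0D : y0 \in D'.
    by have := subsetP (blk_sub hS2 RS) _ xy0; rewrite inE => /andP [].
  have pg : (g, g) \in setX D' D' by rewrite inE /= gD.
  have py : (y0, y0) \in setX D' D' by rewrite inE /= y0D.
  rewrite /= (memS2 SS pg) (col_lemma hS2 RS gz xy0) -(memS2 SS py).
  by case: ifP; rewrite ?inE ?gz.
rewrite !eq2; case: ifP => // _.
have tS : transp R \in S2 by case: hS2 => _ _ ht _; apply: ht.
have uuD : (u, u) \in setX D' D' by rewrite inE /= uD.
have := coh_inum hS2 RS tS (blk_in hS2 uuD) (blk_mem hS2 uuD) _; rewrite /inum.
have ee z : [set g | ((z, g) \in R) && ((g, z) \in transp R)] = [set g | (z, g) \in R].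
  by apply/setP => g; rewrite !inE andbb.
move/(_ u' u'); rewrite !ee; apply; by rewrite e (blk_mem hS2) // inE /= uD'.
Qed.


Lemma rowK u v u' v' : u \in D -> v \in D -> u' \in D -> v' \in D ->
  K (u, v) = K (u', v') -> P (u, u) = P (u', u').
Proof.
move=> uD vD uD' vD'; rewrite /K /fk /= => [[e1 e2 e3]].
rewrite -e1 -e2 in e3.
case ua: (u == a) e1 e3 => e1 e3.
  by rewrite (eqP ua) -(eqP (esym e1)).
case va: (v == a) e2 e3 => e2 e3 //=.
have uvD : (u, v) \in setX D' D' by rewrite inE /= !inD' ua va uD vD.
apply: (row_lemma hS2 (blk_in hS2 uvD) (blk_mem hS2 uvD) (x' := u') (y' := v')).
by rewrite e3 (blk_mem hS2) // inE /= !inD' -e1 -e2 uD' vD'.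
Qed.

Lemma colK u v u' v' : u \in D -> v \in D -> u' \in D -> v' \in D ->
  K (u, v) = K (u', v') -> P (v, v) = P (v', v').
Proof.
move=> uD vD uD' vD' E.
apply: (rowK (v := u) (v' := u')) => //.
rewrite (K_swap (u, v)) (K_swap (u', v')) /=.
by move: E; rewrite /K => [[-> -> ->]].
Qed.

Lemma inum_split kr ks u v : u \in D -> v \in D ->
  inum [set y in setX D D | kr == K y] [set y in setX D D | ks == K y] u v =
  ((kr == K (u, a)) && (ks == K (a, v))) +
  #|[set g in D' | (kr == K (u, g)) && (ks == K (g, v))]|.
Proof.
move=> uD vD; rewrite /inum (cardsD1 a); congr (_ + _).
  by rewrite !inE /= uD vD aD.
apply: eq_card => g; rewrite !inE /= uD vD /=.
by case: (g == a); case: (g \in D); rewrite /= ?andbF.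
Qed.

Lemma cnt_main kr ks u v u' v' : u \in D -> v \in D -> u' \in D -> v' \in D ->
  K (u, v) = K (u', v') ->
  #|[set g in D' | (kr == K (u, g)) && (ks == K (g, v))]| =
  #|[set g in D' | (kr == K (u', g)) && (ks == K (g, v'))]|.
Proof.
move=> uD vD uD' vD' E.
have eqs w z : [set g in D' | (kr == K (w, g)) && (ks == K (g, z))] =
  [set g in D' | [&& kr.1.1 == (w == a), kr.1.2 == false, ks.1.1 == false,
                     ks.1.2 == (z == a), kr.2 == P (if w == a then g else w, g) &
                     ks.2 == P (g, if z == a then g else z)]].
  apply/setP=> g; rewrite !inE; case ga: (g == a) => //=.
  rewrite (Kug _ (negbT ga)) (Kgv _ (negbT ga)).
  case: kr ks => [[? ?] ?] [[? ?] ?]; rewrite !xpair_eqE /=.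
  by rewrite -!andbA; do 4 (case: (_ == _) => //=); rewrite ?andbF.
rewrite !eqs {eqs}; case: kr ks => [[r1 r2] R] [[s1 s2] S0] /=.
move: E; rewrite /K /fk /= => [[e1 e2 e3]].
rewrite -e1 -e2 in e3 *.
case ua: (u == a) e1 e3 => e1 e3; case va: (v == a) e2 e3 => e2 e3; rewrite /= in e3;
  case: (r1 == _); case: (r2 == _); case: (s1 == _); case: (s2 == _) => //=;
  (try apply: cnt_TF); (try apply: cnt_FT); (try apply: cnt_FF);
  rewrite ?inD' ?ua ?va ?uD ?uD' ?vD ?vD' -?e1 -?e2 //.
Qed.


Lemma Shat_inum r s t : r \in Shat -> s \in Shat -> t \in Shat ->
  forall u v u' v', (u, v) \in t -> (u', v') \in t -> inum r s u v = inum r s u' v'.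
Proof.
move=> /Shat_blk [xr _ ->] /Shat_blk [xs _ ->] /Shat_blk [xt _ ->] u v u' v'.
rewrite !inE /= => /andP [/andP [uD vD] /eqP e] /andP [/andP [uD' vD'] /eqP e'].
have E : K (u, v) = K (u', v') by rewrite -e -e'.
rewrite !inum_split //; congr (_ + _); last exact: cnt_main.
rewrite !Kua !Kav (rowK uD vD uD' vD' E) (colK uD vD uD' vD' E).
by move: E; rewrite /K => [[-> -> _]].
Qed.

Lemma Shat_coh : coherent D Shat.
Proof. split; [exact: Shat_part | exact: Shat_diag | exact: Shat_transp | exact: Shat_inum]. Qed.

Lemma Sa_rel r : is_rel Sa r -> is_rel Shat r.
Proof.
move=> hr; apply: (is_rel_blocks Shat_part (rel_sub (cohP hSa) hr)) => x xr.
have xD : x \in setX D D by apply: (subsetP (rel_sub (cohP hSa) hr)).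
have sub := rel_block (cohP hSa) hr xr.
apply/subsetP => y; rewrite pblock_Shat // inE => /andP [yD /eqP e].
by apply: (subsetP sub); apply: refine.
Qed.

Lemma Shat_fib_S2 H : fiber S2 H -> fiber Shat H.
Proof.
rewrite /fiber => HS.
have /set0Pn [[x x'] xx] := partition_neq0 (cohP hS2) HS.
have := xx; rewrite inE /= => /andP [/eqP exx xH]; subst x'.
have xD' : (x, x) \in setX D' D' by apply: (subsetP (blk_sub hS2 HS)).
have xa : (x != a) && (x \in D) by move: xD'; rewrite inE /= inD' => /andP [].
case/andP: xa => xa xD.
have ePx : P (x, x) = diag H := def_pblock (coh_tI hS2) HS xx.
apply/imsetP; exists (x, x); first by rewrite inE /= xD.
have Kxx : K (x, x) = (false, false, diag H) by rewrite /K /fk /= (negbTE xa) ePx.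
apply/setP => [[u v]]; rewrite [in RHS]inE Kxx.
apply/idP/andP => [uvH|[uvD /eqP e]].
  have uvD' : (u, v) \in setX D' D' by apply: (subsetP (blk_sub hS2 HS)).
  move: (uvD'); rewrite inXD' => /and4P [ua uD va vD].
  split; first by rewrite inE /= uD vD.
  by rewrite /K /fk /= (negbTE ua) (negbTE va) (def_pblock (coh_tI hS2) HS uvH).
move: e; rewrite /K /fk /=; case ua: (u == a) => //; case va: (v == a) => //=; case=> e.
have uvD' : (u, v) \in setX D' D'.
  by move: uvD; rewrite inE inXD' ua va => /andP [-> ->].
by rewrite e (blk_mem hS2).
Qed.

Lemma Shat_fib_a : fiber Shat [set a].
Proof.
rewrite /fiber; apply/imsetP; exists (a, a); first by rewrite inE /= aD.
apply/setP => [[u v]]; rewrite !inE /= /K /fk /= eqxx.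
apply/andP/andP => [[/eqP -> ]|[_ ]].
  by move=> /eqP ->; rewrite aD; split => //; apply/eqP; rewrite eqxx.
rewrite !xpair_eqE /= => /andP [/andP [/eqP ua /eqP va] _].
by rewrite (eqP (esym ua)) (eqP (esym va)) eqxx.
Qed.

Lemma Shat_union G : union_of_fibers S2 (G :\ a) -> union_of_fibers Shat G.
Proof.
case=> F hF eF.
case aG: (a \in G).
  exists ([set a] |: F).
    by move=> H; rewrite !inE => /orP [/eqP ->|/hF /Shat_fib_S2] //; exact: Shat_fib_a.
  apply/setP => x; apply/idP/bigcupP => [xG|[H]].
    case xa: (x == a); first by exists [set a]; rewrite ?inE ?eqxx ?xa.
    have : x \in G :\ a by rewrite in_setD1 xa xG.
    by rewrite eF => /bigcupP [H HF xH]; exists H; rewrite ?inE ?HF ?orbT.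
  rewrite !inE => /orP [/eqP -> |HF xH]; first by rewrite inE => /eqP ->.
  have : x \in G :\ a by rewrite eF; apply/bigcupP; exists H.
  by rewrite inE => /andP [].
exists F; first by move=> H /hF /Shat_fib_S2.
rewrite -eF; apply/setP => x; rewrite in_setD1.
by case xa: (x == a) => //=; rewrite (eqP xa) aG.
Qed.

Lemma S2_complete : complete Shat -> complete S2.
Proof.
move=> cH B BS.
have /set0Pn [p pB] := partition_neq0 (cohP hS2) BS.
have pD' : p \in setX D' D' by apply: (subsetP (blk_sub hS2 BS)).
have pD : p \in setX D D by move: pD'; case: p {pB} => u v; rewrite inXD' inE /= => /and4P [_ -> _ ->].
have pc : p \in cover Shat by rewrite (cover_partition Shat_part).
have c1 := cH _ (pblock_mem pc).
apply/eqP; rewrite eqn_leq; apply/andP; split; last by rewrite card_gt0; apply/set0Pn; exists p.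
rewrite -c1; apply: subset_leq_card; apply/subsetP => y yB.
have yD' : y \in setX D' D' by apply: (subsetP (blk_sub hS2 BS)).
rewrite pblock_Shat // inE.
have yD : y \in setX D D by move: yD'; case: y {yB} => u v; rewrite inXD' inE /= => /and4P [_ -> _ ->].
rewrite yD /=.
move: pD' yD'; case: p pB {pD pc c1} => u v pB; case: y yB {yD} => w z yB.
rewrite !inXD' => /and4P [ua _ va _] /and4P [wa _ za _].
rewrite /K /fk /= (negbTE ua) (negbTE va) (negbTE wa) (negbTE za).
by rewrite (def_pblock (coh_tI hS2) BS pB) (def_pblock (coh_tI hS2) BS yB).
Qed.

End Hat.

Unset Implicit Arguments.
Set Strict Implicit.

Theorem lemma3p1 (T : finType) (D : {set T}) (S : {set {set T * T}})
  (Pi : {set {set T}}) (a : T) (Sa : {set {set T * T}}) :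
  coherent D S ->
  (forall G, G \in Pi -> G \subset D) ->
  gen_base D S Pi ->
  a \in D ->
  Pi_fission D S [set [set a]] Sa ->
  gen_base (D :\ a) (restr (D :\ a) Sa) [set G :\ a | G in Pi].
Proof.
move=> hS hPiD [SPi [[hPic hPir] _ hPi3] cPi] aD [[hSa hSar] hSa2 _].
have hfa : diag [set a] \in Sa.
  have [F hF eF] := hSa2 _ (set11 [set a]).
  have : a \in \bigcup_(H in F) H by rewrite -eF set11.
  case/bigcupP => H HF aH.
  have sH : H \subset [set a] by rewrite eF; apply: bigcup_sup.
  have -> : [set a] = H by apply/eqP; rewrite eqEsubset sH sub1set aH.
  exact: hF.
have relsub r : is_rel (restr (D :\ a) Sa) r -> r \subset setX (D :\ a) (D :\ a).
  case=> P0 sP0 ->; apply/subsetP => x /bigcupP [B BP0 xB].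
  have := subsetP sP0 _ BP0; rewrite /restr in_setD1 => /andP [_ /imsetP [s _ Bs]].
  by move: xB; rewrite Bs inE => /andP [].
exists (cplt (D :\ a)); last exact: cplt_complete.
split.
- split; first exact: cplt_coh.
  move=> r hr; apply: (rel_of_complete (cplt_part _) (@cplt_complete _ _)).
  exact: relsub.
- move=> _ /imsetP [G GPi ->].
  exists [set [set x] | x in G :\ a].
    move=> _ /imsetP [x xG ->]; apply: cplt_fiber.
    by move: xG; rewrite !in_setD1 => /andP [-> /(subsetP (hPiD _ GPi)) ->].
  apply/setP => x; apply/idP/bigcupP => [xG|[_ /imsetP [y yG ->]]].
    by exists [set x]; rewrite ?set11 // imset_f.
  by rewrite inE => /eqP ->.
- move=> S2 [hS2 hrel] hfib; split => // r hr.
  have cS2 : complete S2.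
    apply: (S2_complete hS2).
    have hH := Shat_coh aD hS2.
    have [_ hrPi] := hPi3 (Shat D a S2) (conj hH (fun r hr => Sa_rel aD hSa hfa hS2 hrel (hSar r hr)))
      (fun G GPi => Shat_union aD hS2 (hfib _ (imset_f _ GPi))).
    apply: (complete_of_rel (@Shat_part _ D a S2)) => x xD.
    apply: hrPi; apply: (rel_of_complete (cohP hPic) cPi).
    by rewrite sub1set.
  apply: (rel_of_complete (cohP hS2) cS2).
  exact: (rel_sub (cplt_part _) hr).
Qed.
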